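(* Assume $n>3t+2d$. In any execution of Algorithm 1, if a correct process $p_i$ mbrb-broadcasts an app-message $m$ with sequence number $sn$, then $\ell=c-d$ correct processes mbrb-deliver $m$ from $p_i$ with sequence number $sn$ at most 2 communication steps later if $d<\frac{c-\lfloor (n+t)/2\rfloor}{\lfloor (n+t)/2\rfloor+1}$, and at most 3 communication steps later if $d<c-\sqrt{c\cdot\frac{n+t}{2}}$.
   Context: System model. There are $n$ asynchronous processes $p_1,\dots,p_n$ with distinct known identities. Up to $t$ are Byzantine (arbitrary behavior); the rest are correct; $c$ is the number of correct processes in the execution, $n-t\le c\le n$. The network is fully connected, asynchronous, never corrupts/duplicates/creates messages; ''broadcast $M$'' sends $M$ to all $n$ processes; a message adversary may suppress, per broadcast by a correct process, up to $d$ ($0\le d<c$) copies addressed to correct processes, all other copies among correct processes being received. Signatures are unforgeable and public keys are known. Time is measured in communication steps: local computation takes zero time and every imp-message has the same transfer delay of one step. Algorithm 1 (code for $p_i$). Each process stores, for each triplet $(m,sn,j)$, a set of saved valid signatures of that triplet, at most one per signer. On $\mathrm{mbrb\_broadcast}(m,sn)$: $p_i$ saves its own signature of $(m,sn,i)$ and broadcasts $\mathrm{BUNDLE}(m,sn,i,S)$, $S$ the saved signatures for $(m,sn,i)$. On receiving $\mathrm{BUNDLE}(m,sn,j,sigs)$: if $p_i$ has not already mbrb-delivered some $(-,sn,j)$ and $sigs$ contains a valid signature of $(m,sn,j)$ by $p_j$, then: (1) save all new valid signatures of $(m,sn,j)$ in $sigs$; (2) if $p_i$ has not yet signed any $(-,sn,j)$,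 save its own signature of $(m,sn,j)$ and broadcast $\mathrm{BUNDLE}(m,sn,j,\text{all saved signatures for }(m,sn,j))$; (3) if strictly more than $\frac{n+t}{2}$ signatures for $(m,sn,j)$ are saved, broadcast $\mathrm{BUNDLE}(m,sn,j,\text{all saved signatures})$ and mbrb-deliver $(m,sn,j)$. A correct process never uses the same sequence number twice. *)

(* Defs.v *)
From Stdlib Require Import Reals.
From mathcomp Require Import all_boot.
Set Implicit Arguments. Unset Strict Implicit. Unset Printing Implicit Defensive.

(* Model of ONE mbrb instance: fixed source p_i (index [src]) and fixed     *)
(* sequence number sn.  Instances with different (sn, j) do not interact in *)
(* Algorithm 1, so this loses nothing.                       *)
(* A BUNDLE(m', sn, src, sigs) is represented by the pair (m', S) where S   *)
(* is the set of signers of the VALID signatures of (m', sn, src) in sigs   *)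
(* (invalid signatures are discarded by every correct receiver anyway).     *)

Section Model.
Variables (n : nat) (M : eqType).

Definition bundle := (M * {set 'I_n})%type.

Record pstate := PState {
  saved : M -> {set 'I_n};     (* saved signers for triplet (m', sn, src) *)
  signed : bool;               (* has signed some (-, sn, src) *)
  delivered : option M
}.

Definition init_state : pstate := PState (fun _ => set0) false None.

Definition upd (f : M -> {set 'I_n}) (x : M) (S : {set 'I_n}) : M -> {set 'I_n} :=
  fun y => if y == x then S else f y.

(* Handler of Algorithm 1 at correct process q upon BUNDLE(x, sn, src, sigs);
   returns the new state and the broadcasts it performs (in order). *)
Definition on_bundle (t : nat) (src q : 'I_n) (s : pstate) (b : bundle)
    : pstate * seq bundle :=
  let x := b.1 in let sigs := b.2 in
  if (delivered s != None) || (src \notin sigs) then (s, [::]) else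
  let S1 := saved s x :|: sigs in
  let S2 := if signed s then S1 else q |: S1 in
  let out1 := if signed s then [::] else [:: (x, S2)] in
  let sv := upd (saved s) x S2 in
  if n + t < 2 * #|S2|                                   (* step (3): #S2 > (n+t)/2 *)
  then (PState sv true (Some x), out1 ++ [:: (x, S2)])
  else (PState sv true None, out1).

Fixpoint on_bundles (t : nat) (src q : 'I_n) (s : pstate) (l : seq bundle)
    : pstate * seq bundle :=
  match l with
  | [::] => (s, [::])
  | b :: l' =>
      let r1 := on_bundle t src q s b in
      let r2 := on_bundles t src q r1.1 l' in
      (r2.1, r1.2 ++ r2.2)
  end.

Definition bcast_state (src : 'I_n) (m : M) : pstate :=
  PState (upd (fun _ => set0) m [set src]) true None.

(* An execution with unit transfer delay, starting with src's
   mbrb_broadcast(m, sn) at time 0.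
   - st a q    : state of correct q at the end of time a
   - inbox a q : bundles received (and processed, in this order) by q at time a
   - out a p   : broadcasts performed by correct p at time a (in order)
   - recv a p k q : the k-th broadcast of p at time a reaches q (at time a+1)
   - byz a q   : bundles sent by Byzantine processes received by q at time a *)
Definition received_correct (C : {set 'I_n}) (out : nat -> 'I_n -> seq bundle)
    (recv : nat -> 'I_n -> nat -> 'I_n -> bool) (a : nat) (q : 'I_n) : seq bundle :=
  match a with
  | 0 => [::]
  | a'.+1 => flatten [seq mask [seq recv a' p k q | k <- iota 0 (size (out a' p))]
                               (out a' p) | p <- enum C]
  end.

Definition execution (t d : nat) (C : {set 'I_n}) (src : 'I_n) (m : M)
    (st : nat -> 'I_n -> pstate) (inbox out : nat -> 'I_n -> seq bundle)
    (recv : nat -> 'I_n -> nat -> 'I_n -> bool)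
    (byz : nat -> 'I_n -> seq bundle) : Prop :=
  (forall q, q \in C ->
     let pre := if q == src then (bcast_state src m, [:: (m, [set src])])
                else (init_state, [::]) in
     let r := on_bundles t src q pre.1 (inbox 0 q) in
     st 0 q = r.1 /\ out 0 q = pre.2 ++ r.2)
  /\ (forall a q, q \in C ->
        (st a.+1 q, out a.+1 q) = on_bundles t src q (st a q) (inbox a.+1 q))
  (* what a correct process receives: the non-suppressed copies of broadcasts
     by correct processes one step earlier, plus Byzantine bundles, in any order *)
  /\ (forall a q, q \in C ->
        perm_eq (inbox a q) (received_correct C out recv a q ++ byz a q))
  (* message adversary: at most d correct recipients suppressed per broadcast *)
  /\ (forall a p k, p \in C -> k < size (out a p) ->
        #|[set q in C | ~~ recv a p k q]| <= d)
  (* unforgeability: a Byzantine bundle received at time a can carry a correct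
     process k's signature only if k signed that triplet by time a-2
     (k's broadcast reaches Byzantines at a-1, their message arrives at a) *)
  /\ (forall a q b k, q \in C -> b \in byz a q -> k \in C -> k \in b.2 ->
        2 <= a /\ k \in saved (st (a - 2) k) b.1).

End Model.

Definition two_step_cond (n t d c : nat) : Prop :=
  Rlt (INR d) (Rdiv (Rminus (INR c) (INR ((n + t)./2)))
                    (INR ((n + t)./2).+1)).

Definition three_step_cond (n t d c : nat) : Prop :=
  Rlt (INR d) (Rminus (INR c) (sqrt (Rmult (INR c) (Rdiv (INR (n + t)) (INR 2))))).

(* Main.v *)
Require Import Defs.
From Stdlib Require Import Reals.
From mathcomp Require Import all_boot.
From Stdlib Require Import Lra.
From mathcomp Require Import zify.
Set Implicit Arguments. Unset Strict Implicit. Unset Printing Implicit Defensive.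

Lemma mem_mask_nth (T : eqType) (x0 : T) (s : seq T) (bs : seq bool) k :
  size bs = size s -> k < size s -> nth false bs k -> nth x0 s k \in mask bs s.
Proof.
elim: s bs k => [|x s IH] [|b bs] [|k] //=.
- by move=> _ _ ->; rewrite inE eqxx.
- move=> [Hs] Hk Hn; have H := IH bs k Hs Hk Hn.
  by case: b => //; rewrite inE H orbT.
Qed.

Section Lem.
Variables (n : nat) (M : eqType) (t : nat) (src q : 'I_n) (m : M).

Implicit Types (s : pstate n M) (l : seq (bundle n M)) (b : bundle n M).
Definition valid (b : bundle n M) := src \in b.2.
Definition okb (b : bundle n M) := valid b ==> (b.1 == m).
Definition SI (s : pstate n M) :=
  (forall x, x != m -> src \notin saved s x) /\
  (delivered s = None \/ delivered s = Some m).
Definition Bd (s : pstate n M) := 2 * #|saved s m| <= n + t.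

Lemma ob_deliv s l : delivered s != None -> on_bundles t src q s l = (s, [::]).
Proof.
elim: l => [|b l IH] //= Hd.
by rewrite /on_bundle Hd /= IH.
Qed.

Lemma ob_invalid s l : all (fun b => ~~ valid b) l -> on_bundles t src q s l = (s, [::]).
Proof.
elim: l => [|b l IH] //= /andP [Hb Hl].
rewrite /on_bundle.
have -> : (src \notin b.2) = true by exact: Hb.
by rewrite orbT /= IH.
Qed.

Lemma o_SI s b : okb b -> SI s -> SI (on_bundle t src q s b).1 /\
   all (fun b => b.1 == m) (on_bundle t src q s b).2.
Proof.
move=> Hok [H1 H2]; rewrite /on_bundle.
case: ifP => [_|]; first by [].
move/negbT; rewrite negb_or => /andP [_ /negbNE Hv].
have /eqP Hx : b.1 == m by move: Hok; rewrite /okb /valid Hv.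
have HS : forall (S : {set 'I_n}), SI (PState (upd (saved s) b.1 S) true None) /\
   SI (PState (upd (saved s) b.1 S) true (Some b.1)).
  move=> S; split; (split; [move=> x Hxm /=; rewrite /upd Hx (negbTE Hxm); exact: H1|]);
  by [left| right; rewrite Hx].
case: ifP => _ /=; split; try apply HS;
 by case: (signed s) => //=; rewrite ?Hx ?eqxx.
Qed.

Lemma ob_SI s l : all okb l -> SI s -> SI (on_bundles t src q s l).1 /\
   all (fun b => b.1 == m) (on_bundles t src q s l).2.
Proof.
elim: l s => [|b l IH] s //= /andP [Hb Hl] Hs.
have [H1 H2] := o_SI Hb Hs.
have [H3 H4] := IH _ Hl H1.
by rewrite all_cat H2 H4.
Qed.

Lemma o_acc s b : okb b -> delivered (on_bundle t src q s b).1 = None ->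
  [/\ delivered s = None, saved s m \subset saved (on_bundle t src q s b).1 m,
      (valid b -> b.2 \subset saved (on_bundle t src q s b).1 m) &
      (valid b || Bd s -> Bd (on_bundle t src q s b).1)].
Proof.
move=> Hok; rewrite /on_bundle.
case: ifP => [Hr|].
  move=> /= Hd; split => //.
  - by move=> Hv; move: Hr; rewrite Hd /= -/(valid b) Hv.
  - case/orP => // Hv; by move: Hr; rewrite Hd /= -/(valid b) Hv.
move/negbT; rewrite negb_or => /andP [/negbNE Hd0 /negbNE Hv].
have /eqP Hx : b.1 == m by move: Hok; rewrite /okb /valid Hv.
case: ifP => // Hth _ /=.
move: Hd0 => /eqP Hd0.
have Hup : forall S, upd (saved s) b.1 S m = S by move=> S; rewrite /upd Hx eqxx.
rewrite /Bd /= !Hup.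
set S1 := saved s b.1 :|: b.2.
have HS : S1 \subset (if signed s then S1 else q |: S1) by case: (signed s) => //; apply: subsetUr.
split => //.
- apply: subset_trans HS; rewrite /S1 Hx; apply: subsetUl.
- move=> _; apply: subset_trans HS; apply: subsetUr.
- by move=> _; rewrite leqNgt Hth.
Qed.

Lemma ob_acc s l : all okb l -> delivered (on_bundles t src q s l).1 = None ->
  [/\ delivered s = None, saved s m \subset saved (on_bundles t src q s l).1 m,
      (forall b, b \in l -> valid b -> b.2 \subset saved (on_bundles t src q s l).1 m) &
      (has valid l || Bd s -> Bd (on_bundles t src q s l).1)].
Proof.
elim: l s => [|b l IH] s /=.
  by move=> _ ->; split.
move=> /andP [Hb Hl] Hd.
have [D1 S1 V1 B1] := IH _ Hl Hd.
have [D0 S0 V0 B0] := o_acc Hb D1.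
split => //.
- exact: subset_trans S0 S1.
- move=> b'; rewrite inE => /orP [/eqP -> |Hb'] Hv.
    exact: subset_trans (V0 Hv) S1.
  exact: V1.
- case/orP; first case/orP.
  + by move=> Hv; apply: B1; rewrite B0 ?orbT // Hv.
  + by move=> Hv; apply: B1; rewrite Hv.
  + by move=> HB; apply: B1; rewrite B0 ?orbT // HB orbT.
Qed.

Lemma ob_deliv_out s l : delivered s = None ->
  delivered (on_bundles t src q s l).1 != None ->
  exists2 b, b \in (on_bundles t src q s l).2 & (n + t < 2 * #|b.2|) && valid b.
Proof.
elim: l s => [|b l IH] s /=; first by move=> ->.
move=> Hd.
rewrite {1 3}/on_bundle Hd /=.
case: ifP => Hv.
  by move=> H; have [b' Hb' Hc] := IH _ Hd H; exists b' => //; rewrite /on_bundle Hd Hv /=.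
set S2 := (if signed s then _ else _).
case: ifP => Hth.
  move=> _; exists (b.1, S2); last first.
    rewrite /= Hth /valid /=; idtac.
    have : src \in saved s b.1 :|: b.2 by rewrite inE; move: Hv => /negbT; rewrite negbK => ->; rewrite orbT.
    by rewrite /S2; case: (signed s) => // H; rewrite inE H orbT.
  by rewrite /on_bundle Hd Hv Hth /= -/S2 mem_cat mem_cat inE eqxx /= orbT.
move=> H; have [b' Hb' Hc] := IH (PState _ _ None) erefl H; exists b' => //.
by rewrite /on_bundle Hd Hv Hth /= mem_cat Hb' orbT.
Qed.

Lemma ob_first s l : signed s = false -> delivered s = None -> has valid l ->
  exists b rest, (on_bundles t src q s l).2 = b :: rest /\ valid b /\ q \in b.2.
Proof.
elim: l s => [|b l IH] s //= Hs Hd.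
case: (boolP (valid b)) => Hv /=.
  move=> _; rewrite /on_bundle Hd /=.
  have -> : (src \notin b.2) = false by move: Hv; rewrite /valid => ->.
  rewrite Hs /=.
  have Hs2 : src \in q |: (saved s b.1 :|: b.2) by rewrite !inE; move: Hv; rewrite /valid => ->; rewrite !orbT.
  have Hq2 : q \in q |: (saved s b.1 :|: b.2) by rewrite !inE eqxx.
  by case: ifP => _ /=; eexists; eexists; split; first reflexivity.
move=> H; rewrite /on_bundle Hd /=.
have -> : src \notin b.2 by exact: Hv.
exact: IH.
Qed.

End Lem.

Lemma card_split (T : finType) (A : {set T}) (P : pred T) :
  #|[set x in A | P x]| + #|[set x in A | ~~ P x]| = #|A|.
Proof.
rewrite -(cardsID [set x | P x] A); congr (_ + _); apply: eq_card => x; rewrite !inE //.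
by rewrite andbC.
Qed.

Lemma dcount (T : finType) (A B : {set T}) (R : T -> T -> bool) :
  \sum_(x in A) #|B :&: [set y | R y x]| = \sum_(y in B) #|A :&: [set x | R y x]|.
Proof.
have E : forall (X : {set T}) (P : pred T), #|X :&: [set y | P y]| = \sum_(y in X) (P y : nat).
  move=> X P; rewrite -sum1_card [in LHS]big_mkcond [in RHS]big_mkcond /=.
  by apply: eq_bigr => y _; rewrite !inE; case: (y \in X); case: (P y).
rewrite (eq_bigr (fun x => \sum_(y in B) (R y x : nat))); last by move=> x _; rewrite E.
rewrite exchange_big /=; apply: eq_bigr => y _; by rewrite E.
Qed.

Lemma two_nat n t d c : two_step_cond n t d c -> d * ((n+t)./2).+1 + (n+t)./2 < c.
Proof.
rewrite /two_step_cond; set h := (n+t)./2 => H.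
have Hp : Rlt 0 (INR h.+1) by apply: lt_0_INR; apply/ltP.
have H2 : Rlt (Rmult (INR d) (INR h.+1)) (Rminus (INR c) (INR h)).
  have := Rmult_lt_compat_r _ _ _ Hp H.
  by rewrite /Rdiv Rmult_assoc Rinv_l ?Rmult_1_r //; apply: Rgt_not_eq.
apply/ltP; apply: INR_lt; rewrite plus_INR mult_INR; lra.
Qed.

Lemma three_nat n t d c : d < c -> three_step_cond n t d c -> c * (n+t)./2 < (c-d)*(c-d).
Proof.
rewrite /three_step_cond; set h := (n+t)./2 => Hdc H.
set X := Rmult (INR c) (Rdiv (INR (n + t)) (INR 2)).
have HX : Rle 0 X.
  apply: Rmult_le_pos; first exact: pos_INR.
  apply: Rmult_le_pos; first exact: pos_INR.
  by apply: Rlt_le; apply: Rinv_0_lt_compat; apply: lt_0_INR; apply/ltP.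
have Hcd : INR (c - d) = Rminus (INR c) (INR d) by rewrite minus_INR //; apply/leP; apply: ltnW.
have H1 : Rlt (sqrt X) (INR (c - d)).
  rewrite Hcd; have : sqrt X = sqrt (INR c * (INR (n + t) / INR 2)) by []. lra.
have H2 : Rlt X (Rmult (INR (c - d)) (INR (c - d))).
  rewrite -{1}(sqrt_sqrt X HX).
  apply: Rmult_le_0_lt_compat => //; exact: sqrt_pos.
have H3 : Rle (INR (c * h)) X.
  rewrite mult_INR /X; apply: Rmult_le_compat_l; first exact: pos_INR.
  have E := odd_double_half (n + t).
  have : Rle (INR (2 * h)) (INR (n + t)).
    apply: le_INR; apply/leP; rewrite -[X in _ <= X]E -mul2n; apply: leq_addl.
  rewrite mult_INR /= => Hle.
  apply (Rmult_le_reg_l 2); first lra.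
  field_simplify; lra.
apply/ltP; apply: INR_lt; apply: Rle_lt_trans H3 _; by rewrite mult_INR.
Qed.

Ltac gen_cards := repeat match goal with |- context [ #|?A| ] => let x := fresh "x" in move: (#|A|) => x end.

Section Main.
Variables (n t d : nat) (M : eqType) (C : {set 'I_n})
    (src : 'I_n) (m : M)
    (st : nat -> 'I_n -> pstate n M) (inbox out : nat -> 'I_n -> seq (bundle n M))
    (recv : nat -> 'I_n -> nat -> 'I_n -> bool)
    (byz : nat -> 'I_n -> seq (bundle n M)).
Hypothesis Hex : execution t d C src m st inbox out recv byz.
Hypothesis HsrcC : src \in C.

Let H0 := proj1 Hex.
Let Hstep := proj1 (proj2 Hex).
Let Hin := proj1 (proj2 (proj2 Hex)).
Let Hadv := proj1 (proj2 (proj2 (proj2 Hex))).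
Let Hunf := proj2 (proj2 (proj2 (proj2 Hex))).

Lemma advL a p k : p \in C -> k < size (out a p) -> #|[set q in C | ~~ recv a p k q]| <= d.
Proof. exact: Hadv. Qed.

Lemma rc_mem a q b : b \in received_correct C out recv a q ->
  exists a', a = a'.+1 /\ exists2 p, p \in C & b \in out a' p.
Proof.
case: a => [|a] //= /flattenP [s /mapP [p Hp ->] Hb].
exists a; split => //; exists p; first by rewrite mem_enum in Hp.
exact: mem_mask Hb.
Qed.

Lemma rc_in a p k q b0 : p \in C -> k < size (out a p) -> recv a p k q ->
  nth b0 (out a p) k \in received_correct C out recv a.+1 q.
Proof.
move=> Hp Hk Hr /=; apply/flattenP.
eexists; first by apply/mapP; exists p; first rewrite mem_enum.
apply: mem_mask_nth; first by rewrite size_map size_iota.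
  by [].
by rewrite (nth_map 0) ?size_iota // nth_iota.
Qed.

Lemma inbox_split a q b : q \in C -> b \in inbox a q ->
  b \in received_correct C out recv a q \/ b \in byz a q.
Proof.
move=> Hq Hb; have := Hin a Hq; move/perm_mem => E.
by rewrite E mem_cat in Hb; case/orP: Hb; [left|right].
Qed.

Lemma inbox_rc a q b : q \in C -> b \in received_correct C out recv a q -> b \in inbox a q.
Proof. by move=> Hq Hb; rewrite (perm_mem (Hin a Hq)) mem_cat Hb. Qed.

Definition G a := forall k, k \in C -> SI src m (st a k) /\ all (fun b => b.1 == m) (out a k).

Lemma okin_of a q : q \in C -> (forall a', a' < a -> G a') ->
  all (okb src m) (inbox a q).
Proof.
move=> Hq HG; apply/allP => b Hb; rewrite /okb; apply/implyP => Hv.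
case: (inbox_split Hq Hb) => [/rc_mem [a' [Ea [p Hp Hbo]]] | Hbz].
  have [_ /allP Ha] := HG a' ltac:(lia) p Hp; exact: Ha.
have [H2 Hs] := Hunf Hq Hbz HsrcC Hv.
have [[Hsi _] _] := HG (a - 2) ltac:(lia) src HsrcC.
by apply/negPn/negP => /Hsi; rewrite Hs.
Qed.

Lemma G0 : G 0.
Proof.
move=> k Hk; have [E1 E2] := H0 Hk.
have Hok : all (okb src m) (inbox 0 k) by apply: okin_of.
have HSI0 : SI src m (if k == src then (bcast_state src m, [:: (m, [set src])]) else (init_state n M, [::])).1.
  case: ifP => _ /=; (split; [move=> x Hx /=|by left]).
    by rewrite /upd (negbTE Hx) inE.
  by rewrite inE.
have [S1 S2] := ob_SI t k Hok HSI0.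
rewrite E1 E2 all_cat S2 andbT; split => //.
by case: ifP => _ //=; rewrite eqxx.
Qed.

Lemma G_all a : G a.
Proof.
suff: forall b a', a' <= b -> G a' by move=> H; exact: (H a a).
clear a; elim => [|b IH] a' Ha'.
  have -> : a' = 0 by lia.
  exact: G0.
case: (leqP a' b) => Ha; first exact: IH.
have -> : a' = b.+1 by lia.
move=> k Hk.
have Hok : all (okb src m) (inbox b.+1 k) by apply: okin_of => // a'' Ha''; apply: IH; lia.
have [HS _] := IH b (leqnn b) k Hk.
have E := Hstep b Hk.
have [S1 S2] := ob_SI t k Hok HS.
by rewrite -E in S1 S2.
Qed.

Lemma okin a q : q \in C -> all (okb src m) (inbox a q).
Proof. by move=> Hq; apply: okin_of => // a' _; apply: G_all. Qed.

Lemma st_step a q : q \in C -> st a.+1 q = (on_bundles t src q (st a q) (inbox a.+1 q)).1.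
Proof. by move=> Hq; rewrite -(Hstep a Hq). Qed.
Lemma out_step a q : q \in C -> out a.+1 q = (on_bundles t src q (st a q) (inbox a.+1 q)).2.
Proof. by move=> Hq; rewrite -(Hstep a Hq). Qed.

Lemma deliv_cases a q : q \in C -> delivered (st a q) = None \/ delivered (st a q) = Some m.
Proof. by move=> Hq; have [[_ H] _] := G_all a Hq. Qed.

Lemma persist a q : q \in C -> delivered (st a q) = Some m -> delivered (st a.+1 q) = Some m.
Proof. by move=> Hq Hd; rewrite st_step // ob_deliv //= Hd. Qed.

Lemma persist_le a b q : q \in C -> a <= b -> delivered (st a q) = Some m -> delivered (st b q) = Some m.
Proof.
move=> Hq; elim: b => [|b IH] Hab Hd.
  have Ea : a = 0 by lia.
  by rewrite -Ea.
case: (leqP a b) => H; first exact: persist (IH H Hd).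
have Eb : b.+1 = a by lia.
by rewrite Eb.
Qed.

Lemma all_invalid0 q : q \in C -> all (fun b => ~~ valid src b) (inbox 0 q).
Proof.
move=> Hq; apply/allP => b Hb; apply/negP => Hv.
case: (inbox_split Hq Hb) => [/rc_mem [a' [] //] | Hbz].
by have [] := Hunf Hq Hbz HsrcC Hv.
Qed.

Lemma st0 q : q \in C -> st 0 q = (if q == src then bcast_state src m else init_state n M) /\
   out 0 q = (if q == src then [:: (m, [set src])] else [::]).
Proof.
move=> Hq; have [E1 E2] := H0 Hq.
rewrite E1 E2 ob_invalid ?all_invalid0 //=.
by case: ifP.
Qed.

Lemma recv_deliv a q b : q \in C -> b \in inbox a.+1 q -> valid src b -> n + t < 2 * #|b.2| ->
  delivered (st a.+1 q) = Some m.
Proof.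
move=> Hq Hb Hv Hth.
case: (deliv_cases a.+1 Hq) => // Hd.
rewrite st_step // in Hd.
have [_ _ V B] := ob_acc (okin a.+1 Hq) Hd.
have := B ltac:(apply/orP; left; apply/hasP; exists b => //).
rewrite /Bd => HB.
have := subset_leq_card (V b Hb Hv).
move=> H; exfalso; have H2 : 2 * #|b.2| <= 2 * #|saved (on_bundles t src q (st a q) (inbox a.+1 q)).1 m| by rewrite leq_mul2l H orbT.
have := leq_trans Hth (leq_trans H2 HB); by rewrite ltnn.
Qed.


Lemma half_le x y N : 2 * x <= N -> y <= x -> y <= N./2.
Proof. have := odd_double_half N; rewrite -mul2n; lia. Qed.

Definition Q1 := [set p in C | recv 0 src 0 p] :\ src.
Definition bp p := nth (m, set0) (out 1 p) 0.

Lemma Q1_out p : p \in Q1 ->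
  0 < size (out 1 p) /\ valid src (bp p) /\ p \in (bp p).2.
Proof.
rewrite !inE => /andP [Hps /andP [Hp Hr]].
have [E1 _] := st0 Hp; rewrite (negbTE Hps) in E1.
have [_ E2] := st0 HsrcC; rewrite eqxx in E2.
have Hin1 : (m, [set src]) \in inbox 1 p.
  apply: inbox_rc => //.
  have Hk : 0 < size (out 0 src) by rewrite E2.
  by have := rc_in (m, set0) HsrcC Hk Hr; rewrite E2.
have Hv : has (valid src) (inbox 1 p) by apply/hasP; exists (m, [set src]) => //; rewrite /valid /= inE.
have Hs0 : signed (st 0 p) = false by rewrite E1.
have Hd0 : delivered (st 0 p) = None by rewrite E1.
have [b [rest [Eo [Vb Pb]]]] := ob_first t p Hs0 Hd0 Hv.
by rewrite /bp out_step // Eo.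
Qed.

Lemma fail_bound q : 0 < (n + t)./2 -> q \in C -> delivered (st 2 q) != Some m ->
  #|Q1 :&: [set p | recv 1 p 0 q]| + 1 <= (n + t)./2.
Proof.
move=> Hh Hq Hnd.
have Hd : delivered (st 2 q) = None by case: (deliv_cases 2 Hq) => // E; rewrite E eqxx in Hnd.
rewrite st_step // in Hd.
have [_ _ V B] := ob_acc (okin 2 Hq) Hd.
set Rq := Q1 :&: [set p | recv 1 p 0 q].
case: (set_0Vmem Rq) => [->|[p0 Hp0]]; first by rewrite cards0.
have Hbin : forall p, p \in Rq -> bp p \in inbox 2 q /\ valid src (bp p) /\ p \in (bp p).2.
  move=> p; rewrite inE => /andP [Hp1' Hr]; rewrite inE in Hr.
  have [Hs [Hv Hpp]] := Q1_out Hp1'.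
  split => //; apply: inbox_rc => //; apply: rc_in => //.
  by move: Hp1'; rewrite /Q1 !inE => /andP [_ /andP []].
have [Hb0 [Hv0 _]] := Hbin p0 Hp0.
have HB := B ltac:(apply/orP; left; apply/hasP; exists (bp p0) => //).
rewrite /Bd in HB.
have Hsub : src |: Rq \subset saved (on_bundles t src q (st 1 q) (inbox 2 q)).1 m.
  apply/subsetP => x /setU1P [->|Hx].
    by apply: (subsetP (V _ Hb0 Hv0)).
  have [Hb [Hv Hxx]] := Hbin x Hx.
  by apply: (subsetP (V _ Hb Hv)).
have Hns : src \notin Rq by rewrite /Rq /Q1 !inE eqxx.
have := subset_leq_card Hsub; rewrite cardsU1 Hns addnC => H.
exact: half_le HB H.
Qed.


Lemma spread a q0 : q0 \in C -> a <= 1 -> delivered (st a q0) = None ->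
  delivered (st a.+1 q0) = Some m ->
  #|C| - d <= #|[set q in C | delivered (st 3 q) == Some m]|.
Proof.
move=> Hq0 Ha Hn Hs.
have Hs' : delivered (on_bundles t src q0 (st a q0) (inbox a.+1 q0)).1 != None by rewrite -st_step // Hs.
have [b Hb /andP [Hth Hv]] := ob_deliv_out Hn Hs'.
rewrite -out_step // in Hb.
set k := index b (out a.+1 q0).
have Hk : k < size (out a.+1 q0) by rewrite index_mem.
have Hnth : nth b (out a.+1 q0) k = b by apply: nth_index.
have HX : [set q in C | recv a.+1 q0 k q] \subset [set q in C | delivered (st 3 q) == Some m].
  apply/subsetP => q; rewrite !inE => /andP [Hq Hr]; rewrite Hq /=.
  have Hin2 : b \in inbox a.+2 q by apply: inbox_rc => //; rewrite -{1}Hnth; apply: rc_in.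
  by rewrite (persist_le (a:=a.+2)) ?(recv_deliv Hq Hin2 Hv Hth) //; lia.
have H1 := Hadv Hq0 Hk; have H2 := card_split C (fun q => recv a.+1 q0 k q); have H3 := subset_leq_card HX.
lia.
Qed.

Lemma main_sec : 3 * t + 2 * d < n -> n - t <= #|C| -> d < #|C| ->
  (two_step_cond n t d #|C| ->
     #|C| - d <= #|[set q in C | delivered (st 2 q) == Some m]|) /\
  (three_step_cond n t d #|C| ->
     #|C| - d <= #|[set q in C | delivered (st 3 q) == Some m]|).
Proof.
move=> Hn Hc Hdc.
have [_ E0] := st0 HsrcC; rewrite eqxx in E0.
have Hk0 : 0 < size (out 0 src) by rewrite E0.
have Hbin : forall p, p \in C -> recv 0 src 0 p -> (m, [set src]) \in inbox 1 p.
  move=> p Hp Hr; apply: inbox_rc => //.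
  by have := rc_in (m, set0) HsrcC Hk0 Hr; rewrite E0.
have Hvs : valid src (m, [set src]) by rewrite /valid /= inE.
case: (posnP ((n + t)./2)) => Hh.
  have Hnt : n + t <= 1.
    have := odd_double_half (n + t); rewrite Hh /=; case: (odd (n + t)) => <- //.
  have Hd0 : d = 0 by lia.
  have Hr : recv 0 src 0 src.
    have := Hadv HsrcC Hk0; rewrite Hd0 leqn0 cards_eq0 => /eqP E.
    apply/negPn/negP => Hnr.
    have : src \in [set q in C | ~~ recv 0 src 0 q] by rewrite inE HsrcC Hnr.
    by rewrite E inE.
  have D1 : delivered (st 1 src) = Some m.
    apply: (recv_deliv (a := 0) HsrcC (Hbin _ HsrcC Hr) Hvs); rewrite /= cards1; lia.
  have Hc1 : #|C| <= 1.
    apply: leq_trans (max_card _) _; rewrite card_ord; lia.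
  have Gen : forall a, 1 <= a -> #|C| - d <= #|[set q in C | delivered (st a q) == Some m]|.
    move=> a Ha; apply: leq_trans (_ : 1 <= _); first lia.
    apply/card_gt0P; exists src; rewrite inE HsrcC /=.
    by rewrite (persist_le HsrcC Ha D1).
  by split => _; apply: Gen.
have HQ : #|C| <= #|Q1| + d + 1.
  have H1 := advL HsrcC Hk0; have H2 := card_split C (recv 0 src 0).
  have H3 := cardsD1 src [set p in C | recv 0 src 0 p]; rewrite /Q1.
  have : (src \in [set p in C | recv 0 src 0 p]) <= 1 by case: (_ \in _).
  rewrite -H2 H3 => _; move: H1; case: (src \in _); move: (#|_ :\ src|) => y; move: (#|[set x in C | _]|) => z; idtac "x"; lia.
set Fs := [set q in C | delivered (st 2 q) != Some m].
have S1 : \sum_(q in Fs) #|Q1 :&: [set p | recv 1 p 0 q]| <= #|Fs| * ((n + t)./2 - 1).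
  rewrite -sum_nat_const; apply: leq_sum => q; rewrite inE => /andP [Hq Hnd].
  have := fail_bound Hh Hq Hnd; lia.
have S2 : #|Q1| * #|Fs| <= \sum_(p in Q1) #|Fs :&: [set q | recv 1 p 0 q]| + #|Q1| * d.
  rewrite -!sum_nat_const -big_split /=; apply: leq_sum => p Hp.
  have [Hs _] := Q1_out Hp.
  have Hpc : p \in C by move: Hp; rewrite /Q1 !inE => /andP [_ /andP []].
  have A1 := advL Hpc Hs; have A2 := cardsID [set q | recv 1 p 0 q] Fs.
  have A3 : #|Fs :\: [set q | recv 1 p 0 q]| <= #|[set q in C | ~~ recv 1 p 0 q]|.
    apply: subset_leq_card; apply/subsetP => x; rewrite !inE => /andP [Hx /andP [HxC _]].
    by rewrite HxC Hx.
  move: A1 A2 A3; gen_cards; lia.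
rewrite (dcount Fs Q1 (fun p q => recv 1 p 0 q)) in S1.
have Hsplit := card_split C (fun q => delivered (st 2 q) == Some m).
rewrite -/Fs in Hsplit.
set D2 := [set q in C | delivered (st 2 q) == Some m] in Hsplit *.
set f := #|Fs| in S1 S2 Hsplit *.
set s := #|Q1| in HQ S2 *.
set c := #|C| in Hc HQ Hdc Hsplit *.
set h := (n + t)./2 in Hh S1 *.
set S := \sum_(p in Q1) _ in S1 S2.
split => H.
  have := two_nat H; rewrite -/h => HT.
  suff : f <= d by lia.
  rewrite leqNgt; apply/negP => Hfd.
  nia.
have HT := three_nat Hdc H; rewrite -/h in HT.
have Hf : f < c.
  rewrite ltn_neqAle; apply/andP; split; last by lia.
  apply/negP => /eqP Efc.
  rewrite Efc in S1 S2.
  nia.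
have : 0 < #|D2| by lia.
case/card_gt0P => q0; rewrite inE => /andP [Hq0 /eqP Hd2].
have [E1 _] := st0 Hq0.
have Hd0 : delivered (st 0 q0) = None by rewrite E1; case: ifP.
case: (deliv_cases 1 Hq0) => H1.
  exact: (spread (a := 1) Hq0 _ H1 Hd2).
exact: (spread (a := 0) Hq0 _ Hd0 H1).
Qed.

End Main.

Unset Implicit Arguments.

Theorem mainTheorem10 (n t d : nat) (M : eqType) (C : {set 'I_n})
    (src : 'I_n) (m : M)
    (st : nat -> 'I_n -> pstate n M) (inbox out : nat -> 'I_n -> seq (bundle n M))
    (recv : nat -> 'I_n -> nat -> 'I_n -> bool)
    (byz : nat -> 'I_n -> seq (bundle n M)) :
  3 * t + 2 * d < n ->
  n - t <= #|C| ->
  d < #|C| ->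
  src \in C ->
  execution t d C src m st inbox out recv byz ->
  (two_step_cond n t d #|C| ->
     #|C| - d <= #|[set q in C | delivered (st 2 q) == Some m]|) /\
  (three_step_cond n t d #|C| ->
     #|C| - d <= #|[set q in C | delivered (st 3 q) == Some m]|).
Proof.
move=> Hn Hc Hdc Hs Hex.
exact: (main_sec Hex Hs Hn Hc Hdc).
Qed.
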